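(* Let $A=(a_{n,k})$ be as described in the context. If $A$ satisfies the $MHBVS$ condition, then \[ \left|\sum_{k=0}^n a_{n,k}D_k(t)\right|=O\!\left(t^{-1}\,\overline{A}_{n,n-2\tau}\right), \] and if $A$ satisfies the $MRBVS$ condition, then \[ \left|\sum_{k=0}^n a_{n,k}D_k(t)\right|=O\!\left(t^{-1}A_{n,\tau}\right), \] for all $n=2,3,\dots$ and all $\frac{2\pi}{n}\le t\le\pi$, where $\tau=[\pi/t]$ (integer part), with $O$-constants independent of $n$ and $t$.
   Context: $A=(a_{n,k})$ is an infinite lower triangular real matrix with $a_{n,k}\ge0$ for $0\le k\le n$, $a_{n,k}=0$ for $k>n$, and $\sum_{k=0}^n a_{n,k}=1$ for every $n$. For $0\le m\le n$, $A_{n,m}=\sum_{k=0}^m a_{n,k}$ and $\overline A_{n,m}=\sum_{k=m}^n a_{n,k}$. $D_k(t)=\frac12+\sum_{\nu=1}^k\cos\nu t$ is the Dirichlet kernel. ''$A$ satisfies the $MRBVS$ condition'' means: there is a constant $K$ such that for all $n$ and all $0\le m<n$, $\sum_{k=m}^{n-1}|a_{n,k}-a_{n,k+1}|\le K\frac{1}{m+1}\sum_{m/2\le k\le m}a_{n,k}$. ''$A$ satisfies the $MHBVS$ condition'' means: there is a constant $K$ such that for all $n$ and all $0\le m<n$, $\sum_{k=0}^{n-m-1}|a_{n,k}-a_{n,k+1}|\le K\frac1{m+1}\sum_{k=n-m}^{n}a_{n,k}$. *)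

(* Defs.v *)
From Stdlib Require Import Reals Lra Lia List.
Import ListNotations.
Open Scope R_scope.

(* sumR f lo hi = sum_{k=lo}^{hi} f k  (empty, = 0, when hi < lo) *)
Definition sumR (f : nat -> R) (lo hi : nat) : R :=
  fold_right Rplus 0 (map f (seq lo (S hi - lo))).

Definition row_stochastic_lt (A : nat -> nat -> R) : Prop :=
  (forall n k, (k <= n)%nat -> 0 <= A n k) /\
  (forall n k, (n < k)%nat -> A n k = 0) /\
  (forall n, sumR (A n) 0 n = 1).

Definition Alow (A : nat -> nat -> R) (n m : nat) : R := sumR (A n) 0 m.
Definition Aup (A : nat -> nat -> R) (n m : nat) : R := sumR (A n) m n.

Definition Dir (k : nat) (t : R) : R :=
  / 2 + sumR (fun nu => cos (INR nu * t)) 1 k.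

(* MRBVS: sum_{k=m}^{n-1} |a_{n,k}-a_{n,k+1}| <= K/(m+1) sum_{m/2<=k<=m} a_{n,k};
   the naturals k with m/2 <= k are those with k >= (m+1)/2 (Nat division). *)
Definition MRBVS (A : nat -> nat -> R) : Prop :=
  exists K : R, forall n m : nat, (m < n)%nat ->
    sumR (fun k => Rabs (A n k - A n (S k))) m (n - 1)
    <= K * / INR (S m) * sumR (A n) ((m + 1) / 2) m.

Definition MHBVS (A : nat -> nat -> R) : Prop :=
  exists K : R, forall n m : nat, (m < n)%nat ->
    sumR (fun k => Rabs (A n k - A n (S k))) 0 (n - m - 1)
    <= K * / INR (S m) * sumR (A n) (n - m) n.

Definition tau (t : R) : nat := Z.to_nat (Int_part (PI / t)).

(* Main.v *)
Require Import Defs.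
From Stdlib Require Import Reals Lra Lia List.
Open Scope R_scope.

Definition G (f : nat -> R) (lo c : nat) : R := fold_right Rplus 0 (map f (seq lo c)).

Lemma sumR_G f lo hi : sumR f lo hi = G f lo (S hi - lo).
Proof. reflexivity. Qed.

Lemma G0 f lo : G f lo 0 = 0.
Proof. reflexivity. Qed.

Lemma GS f lo c : G f lo (S c) = G f lo c + f (lo + c)%nat.
Proof. unfold G. rewrite seq_S, map_app, fold_right_app. simpl.
  generalize (map f (seq lo c)). intros l. induction l; simpl; lra. Qed.

Lemma Gadd f lo a b : G f lo (a + b) = G f lo a + G f (lo + a) b.
Proof. induction b. rewrite Nat.add_0_r, G0; lra.
  rewrite Nat.add_succ_r, !GS, IHb, Nat.add_assoc; lra. Qed.

Lemma Gext f g lo c : (forall k, (lo <= k < lo + c)%nat -> f k = g k) -> G f lo c = G g lo c.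
Proof. induction c; intros H. reflexivity. rewrite !GS, IHc, H; try lia; try lra.
  intros; apply H; lia. Qed.

Lemma Gnonneg f lo c : (forall k, 0 <= f k) -> 0 <= G f lo c.
Proof. intros H; induction c. rewrite G0; lra. rewrite GS; specialize (H (lo+c)%nat); lra. Qed.

Lemma Gle f g lo c : (forall k, f k <= g k) -> G f lo c <= G g lo c.
Proof. intros H; induction c. rewrite !G0; lra. rewrite !GS; specialize (H (lo+c)%nat); lra. Qed.

Lemma Gplus f g lo c : G (fun k => f k + g k) lo c = G f lo c + G g lo c.
Proof. induction c. rewrite !G0; lra. rewrite !GS, IHc; lra. Qed.

Lemma Gminus f g lo c : G (fun k => f k - g k) lo c = G f lo c - G g lo c.
Proof. induction c. rewrite !G0; lra. rewrite !GS, IHc; lra. Qed.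

Lemma Gscal r f lo c : G (fun k => r * f k) lo c = r * G f lo c.
Proof. induction c. rewrite !G0; lra. rewrite !GS, IHc; lra. Qed.

Lemma Gconst r lo c : G (fun _ => r) lo c = INR c * r.
Proof. induction c. rewrite G0; simpl; lra. rewrite GS, IHc, S_INR; lra. Qed.

Lemma Gabs f lo c : Rabs (G f lo c) <= G (fun k => Rabs (f k)) lo c.
Proof. induction c. rewrite !G0, Rabs_R0; lra. rewrite !GS.
  eapply Rle_trans. apply Rabs_triang. lra. Qed.

Lemma Gbound u v B lo c : (forall k, Rabs (v k) <= B) ->
  Rabs (G (fun k => u k * v k) lo c) <= B * G (fun k => Rabs (u k)) lo c.
Proof. intros H. eapply Rle_trans. apply Gabs. rewrite <- Gscal. apply Gle.
  intros k. rewrite Rabs_mult. pose proof (Rabs_pos (u k)). specialize (H k).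
  rewrite Rmult_comm. apply Rmult_le_compat_r; lra. Qed.

Lemma Gsub f lo c lo' c' : (forall k, 0 <= f k) -> (lo' <= lo)%nat -> (lo + c <= lo' + c')%nat ->
  G f lo c <= G f lo' c'.
Proof. intros H H1 H2.
  replace c' with ((lo - lo') + c + (lo' + c' - lo - c))%nat by lia.
  rewrite !Gadd. replace (lo' + (lo - lo'))%nat with lo by lia.
  pose proof (Gnonneg f lo' (lo - lo') H). pose proof (Gnonneg f (lo + c) (lo' + c' - lo - c) H).
  replace (lo' + (lo - lo' + c))%nat with (lo + c)%nat by lia. lra. Qed.

Lemma Gtel a p c : a (p + c)%nat <= a p + G (fun k => Rabs (a k - a (S k))) p c.
Proof. induction c. rewrite Nat.add_0_r, G0; lra.
  rewrite GS. replace (p + S c)%nat with (S (p + c)) by lia.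
  pose proof (Rle_abs (a (S (p + c)) - a (p + c)%nat)). rewrite Rabs_minus_sym in H. lra. Qed.

Lemma Gavg x f E p c : (forall i, (i < c)%nat -> x <= f (p + i)%nat + E) ->
  INR c * x <= G f p c + INR c * E.
Proof. induction c; intros H. simpl; rewrite G0; lra.
  rewrite GS, S_INR. assert (x <= f (p + c)%nat + E) by (apply H; lia).
  assert (INR c * x <= G f p c + INR c * E) by (apply IHc; intros; apply H; lia). lra. Qed.

Lemma abel a D p :
  G (fun k => a k * D k) 0 p =
  G (fun k => (a k - a (S k)) * G D 0 (S k)) 0 p + a p * G D 0 p.
Proof. induction p. rewrite !G0; lra. rewrite !GS, IHp. simpl. ring. Qed.

Lemma Dir_S k t : Dir (S k) t = Dir k t + cos (INR (S k) * t).
Proof. unfold Dir. rewrite !sumR_G. replace (S (S k) - 1)%nat with (S (S k - 1)) by lia.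
  rewrite GS. replace (1 + (S k - 1))%nat with (S k) by lia. lra. Qed.

Lemma Dir_0 t : Dir 0 t = /2.
Proof. unfold Dir. rewrite sumR_G. simpl. rewrite G0. lra. Qed.

Lemma dir_sin k t : 2 * sin (t/2) * Dir k t = sin ((INR k + /2) * t).
Proof. induction k.
  rewrite Dir_0. simpl. replace ((0 + /2) * t) with (t/2) by lra. field.
  rewrite Dir_S, Rmult_plus_distr_l, IHk.
  set (x := INR (S k) * t). replace ((INR k + /2) * t) with (x - t/2) by (unfold x; rewrite S_INR; lra).
  replace ((INR (S k) + /2) * t) with (x + t/2) by (unfold x; lra).
  rewrite sin_plus, sin_minus. ring. Qed.

Lemma dirsum_id k t : 4 * (sin (t/2))^2 * G (fun j => Dir j t) 0 k = 1 - cos (INR k * t).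
Proof. induction k.
  rewrite G0. simpl. rewrite Rmult_0_l, cos_0. lra.
  rewrite GS. simpl (0 + k)%nat.
  replace (4 * sin (t / 2) ^ 2 * (G (fun j : nat => Dir j t) 0 k + Dir k t)) with
   (4 * sin (t / 2) ^ 2 * G (fun j : nat => Dir j t) 0 k + 2 * sin (t/2) * (2 * sin (t/2) * Dir k t)).
  2: ring.
  rewrite IHk, dir_sin.
  set (x := (INR k + /2) * t). replace (INR k * t) with (x - t/2) by (unfold x; lra).
  replace (INR (S k) * t) with (x + t/2) by (unfold x; rewrite S_INR; lra).
  rewrite cos_plus, cos_minus. ring. Qed.

Lemma dir_bound k t : 0 < sin (t/2) -> Rabs (Dir k t) <= / (2 * sin (t/2)).
Proof. intros H. pose proof (dir_sin k t).
  assert (Dir k t = sin ((INR k + /2) * t) / (2 * sin (t/2))) by (rewrite <- H0; field; lra).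
  rewrite H1. unfold Rdiv. rewrite Rabs_mult, (Rabs_right (/ _)).
  pose proof (SIN_bound ((INR k + /2) * t)). assert (Rabs (sin ((INR k + /2) * t)) <= 1) by (apply Rabs_le; lra).
  assert (0 < / (2 * sin (t/2))) by (apply Rinv_0_lt_compat; lra). nra.
  apply Rle_ge, Rlt_le, Rinv_0_lt_compat; lra. Qed.

Lemma dirsum_bound k t : 0 < sin (t/2) -> Rabs (G (fun j => Dir j t) 0 k) <= / (2 * (sin (t/2))^2).
Proof. intros H. pose proof (dirsum_id k t). set (u := sin (t/2)) in *.
  pose proof (COS_bound (INR k * t)). set (c := cos (INR k * t)) in *.
  assert (0 < u ^ 2) by (apply pow_lt; lra).
  assert (G (fun j => Dir j t) 0 k = (1 - c) * / (4 * u ^2)) by (rewrite <- H0; field; lra).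
  rewrite H3. rewrite Rabs_mult, Rabs_right, Rabs_right.
  assert (E : / (2 * u ^ 2) = 2 * / (4 * u ^ 2)) by (field; lra).
  rewrite E. assert (0 < / (4 * u ^ 2)) by (apply Rinv_0_lt_compat; lra). nra.
  apply Rle_ge, Rlt_le, Rinv_0_lt_compat; lra. lra. Qed.

Lemma sin_lowb x : 0 <= x -> x <= PI -> x - x*x*x/6 <= sin x.
Proof. intros. pose proof (sin_bound x 0 H H0) as [H1 _].
 unfold sin_approx, sin_term in H1. simpl in H1. unfold INR in H1. simpl in H1. lra. Qed.

Lemma sin_half_low t : 0 < t -> t <= PI -> t / 6 <= sin (t/2).
Proof. intros. pose proof PI_4. pose proof (sin_lowb (t/2)). assert (t/2 <= 2) by lra.
  assert (t/2 * (t/2) <= 4) by nra. nra. Qed.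

Definition Dl (a : nat -> R) k := Rabs (a k - a (S k)).

Lemma Dl_nn a k : 0 <= Dl a k.
Proof. apply Rabs_pos. Qed.

Lemma ptR (a : nat -> R) n m K : (forall k, 0 <= a k) -> 0 <= K -> (1 <= m)%nat -> (m < n)%nat ->
  (forall m', (m' < n)%nat -> G (Dl a) m' (n - m') <= K * / INR (S m') * G a ((m'+1)/2) (S m' - (m'+1)/2)) ->
  a m <= (2 + 2 * K) * / INR (S m) * G a 0 (S m).
Proof. intros Ha HK Hm Hmn H.
  set (L := ((m+1)/2)%nat). set (c := (S m - L)%nat).
  assert (HL := Nat.div_mod (m+1) 2 ltac:(lia)). assert (Hr := Nat.mod_upper_bound (m+1) 2 ltac:(lia)).
  fold L in HL.
  set (Al := G a 0 (S m)).
  assert (HAl : 0 <= Al) by (apply Gnonneg; auto).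
  set (EL := G (Dl a) L (n - L)).
  assert (H1 : EL <= K * / INR (S L) * Al).
  { eapply Rle_trans. apply H. lia. apply Rmult_le_compat_l.
    apply Rmult_le_pos; auto. left; apply Rinv_0_lt_compat, lt_0_INR; lia.
    assert (HL3 := Nat.div_mod (L+1) 2 ltac:(lia)). assert (Hr3 := Nat.mod_upper_bound (L+1) 2 ltac:(lia)).
    apply Gsub; auto; lia. }
  assert (H2 : INR c * a m <= G a L c + INR c * EL).
  { apply Gavg. intros i Hi. unfold c in Hi. pose proof (Gtel a (L + i) (m - L - i)).
    replace (L + i + (m - L - i))%nat with m in H0 by lia.
    assert (G (fun k => Rabs (a k - a (S k))) (L + i) (m - L - i) <= EL) by (apply Gsub; auto; try (intros; apply Rabs_pos); lia).
    lra. }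
  assert (H3 : G a L c <= Al) by (apply Gsub; auto; lia).
  assert (Hc : INR (S m) <= 2 * INR c).
  { replace 2 with (INR 2) by reflexivity. rewrite <- mult_INR. apply le_INR. lia. }
  assert (HL2 : INR (S m) <= 2 * INR (S L)).
  { replace 2 with (INR 2) by reflexivity. rewrite <- mult_INR. apply le_INR. lia. }
  assert (Pm : 0 < INR (S m)) by (apply lt_0_INR; lia).
  assert (Pc : 0 < INR c) by (apply lt_0_INR; lia).
  assert (PL : 0 < INR (S L)) by (apply lt_0_INR; lia).
  assert (HKL : K * / INR (S L) <= 2 * K * / INR (S m)).
  { apply Rmult_le_reg_r with (INR (S L) * INR (S m)). nra.
    replace (K * / INR (S L) * (INR (S L) * INR (S m))) with (K * INR (S m)) by (field; lra).
    replace (2 * K * / INR (S m) * (INR (S L) * INR (S m))) with (2 * K * INR (S L)) by (field; lra). nra. }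
  assert (HE : EL <= 2 * K * / INR (S m) * Al).
  { eapply Rle_trans. apply H1. apply Rmult_le_compat_r; auto. }
  assert (INR c * a m <= Al + INR c * (2 * K * / INR (S m) * Al)) by nra.
  assert (a m <= Al * / INR c + 2 * K * / INR (S m) * Al).
  { apply Rmult_le_reg_l with (INR c). auto.
    replace (INR c * (Al * / INR c + 2 * K * / INR (S m) * Al)) with (Al + INR c * (2 * K * / INR (S m) * Al)) by (field; lra). auto. }
  assert (Al * / INR c <= 2 * / INR (S m) * Al).
  { apply Rmult_le_reg_r with (INR c * INR (S m)). nra.
    replace (Al * / INR c * (INR c * INR (S m))) with (Al * INR (S m)) by (field; lra).
    replace (2 * / INR (S m) * Al * (INR c * INR (S m))) with (2 * INR c * Al) by (field; lra). nra. }
  nra. Qed.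

Lemma coreR (a D : nat -> R) n m K B1 B2 : (forall k, 0 <= a k) -> a (S n) = 0 -> 0 <= K -> (1 <= m)%nat -> (m < n)%nat ->
  (forall m', (m' < n)%nat -> G (Dl a) m' (n - m') <= K * / INR (S m') * G a ((m'+1)/2) (S m' - (m'+1)/2)) ->
  (forall k, Rabs (D k) <= B1) -> (forall k, Rabs (G D 0 k) <= B2) ->
  Rabs (G (fun k => a k * D k) 0 (S n)) <= B1 * G a 0 (S m) + B2 * ((4 + 6 * K) * / INR (S m)) * G a 0 (S m).
Proof. intros Ha Han HK Hm Hmn H HB1 HB2.
  assert (Pm : 0 < INR (S m)) by (apply lt_0_INR; lia).
  set (Al := G a 0 (S m)). assert (HAl : 0 <= Al) by (apply Gnonneg; auto).
  assert (B2p : 0 <= B2) by (specialize (HB2 0%nat); pose proof (Rabs_pos (G D 0 0)); lra).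
  assert (Hid : G (fun k => a k * D k) 0 (S n) =
     G (fun k => a k * D k) 0 m - a m * G D 0 m + G (fun k => (a k - a (S k)) * G D 0 (S k)) m (S n - m)).
  { rewrite abel, Han. replace (S n) with (m + (S n - m))%nat at 1 by lia. rewrite Gadd, (abel a D m). simpl. ring. }
  rewrite Hid.
  set (E := G (Dl a) m (n - m)).
  assert (HE : E <= K * / INR (S m) * Al).
  { eapply Rle_trans. apply H. auto. apply Rmult_le_compat_l.
    apply Rmult_le_pos; auto. left; apply Rinv_0_lt_compat; lra.
    assert (HL3 := Nat.div_mod (m+1) 2 ltac:(lia)). assert (Hr3 := Nat.mod_upper_bound (m+1) 2 ltac:(lia)).
    apply Gsub; auto; lia. }
  assert (Hpt := ptR a n m K Ha HK Hm Hmn H). fold Al in Hpt.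
  assert (Han2 : a n <= a m + E).
  { pose proof (Gtel a m (n - m)). replace (m + (n - m))%nat with n in H0 by lia. exact H0. }
  assert (T1 : Rabs (G (fun k => a k * D k) 0 m) <= B1 * Al).
  { eapply Rle_trans. apply Gbound. apply HB1. apply Rmult_le_compat_l.
    specialize (HB1 0%nat); pose proof (Rabs_pos (D 0%nat)); lra.
    eapply Rle_trans. apply Gle. intros k. rewrite Rabs_right. apply Rle_refl. apply Rle_ge, Ha.
    apply Gsub; auto; lia. }
  assert (T2 : Rabs (a m * G D 0 m) <= B2 * a m).
  { rewrite Rabs_mult, Rabs_right by (apply Rle_ge, Ha). rewrite Rmult_comm. apply Rmult_le_compat_r; auto. }
  assert (T3 : Rabs (G (fun k => (a k - a (S k)) * G D 0 (S k)) m (S n - m)) <= B2 * (E + a n)).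
  { eapply Rle_trans. apply Gbound. intros; apply HB2. apply Rmult_le_compat_l; auto.
    replace (S n - m)%nat with (S (n - m)) by lia. rewrite GS. replace (m + (n - m))%nat with n by lia.
    rewrite Han, Rminus_0_r, (Rabs_right (a n)) by (apply Rle_ge, Ha). unfold E, Dl. lra. }
  assert (Rabs (G (fun k => a k * D k) 0 m - a m * G D 0 m + G (fun k => (a k - a (S k)) * G D 0 (S k)) m (S n - m))
     <= B1 * Al + B2 * (2 * a m + 2 * E)).
  { eapply Rle_trans. apply Rabs_triang. eapply Rle_trans. apply Rplus_le_compat_r. apply Rabs_triang.
    rewrite Rabs_Ropp. assert (B2 * a n <= B2 * (a m + E)) by (apply Rmult_le_compat_l; auto). lra. }
  eapply Rle_trans. apply H0. apply Rplus_le_compat_l. rewrite Rmult_assoc. apply Rmult_le_compat_l; auto.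
  assert (0 <= K * / INR (S m) * Al) by (apply Rmult_le_pos; auto; apply Rmult_le_pos; auto; left; apply Rinv_0_lt_compat; lra).
  replace ((4 + 6 * K) * / INR (S m) * Al) with (2 * ((2 + 2 * K) * / INR (S m) * Al) + 2 * (K * / INR (S m) * Al)) by ring.
  lra. Qed.

Lemma Gtel2 (a : nat -> R) p c : a p <= a (p + c)%nat + G (fun k => Rabs (a k - a (S k))) p c.
Proof. induction c. rewrite Nat.add_0_r, G0; lra.
  rewrite GS. replace (p + S c)%nat with (S (p + c)) by lia.
  pose proof (Rle_abs (a (p + c)%nat - a (S (p + c)))). lra. Qed.

Lemma coreH (a D : nat -> R) n m K B1 B2 : (forall k, 0 <= a k) -> 0 <= K -> (m < n)%nat -> (2 * m <= n)%nat ->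
  (forall m', (m' < n)%nat -> G (Dl a) 0 (n - m') <= K * / INR (S m') * G a (n - m') (S m')) ->
  (forall k, Rabs (D k) <= B1) -> (forall k, Rabs (G D 0 k) <= B2) ->
  Rabs (G (fun k => a k * D k) 0 (S n)) <= B1 * G a (n - 2 * m) (S n - (n - 2 * m))
     + B2 * ((1 + 2 * K) * / INR (S m)) * G a (n - 2 * m) (S n - (n - 2 * m)).
Proof. intros Ha HK Hmn H2m H HB1 HB2.
  assert (Pm : 0 < INR (S m)) by (apply lt_0_INR; lia).
  set (p := (n - 2 * m)%nat).
  set (Au := G a p (S n - p)). assert (HAu : 0 <= Au) by (apply Gnonneg; auto).
  assert (B2p : 0 <= B2) by (specialize (HB2 0%nat); pose proof (Rabs_pos (G D 0 0)); lra).
  assert (B1p : 0 <= B1) by (specialize (HB1 0%nat); pose proof (Rabs_pos (D 0%nat)); lra).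
  assert (Hid : G (fun k => a k * D k) 0 (S n) =
     G (fun k => (a k - a (S k)) * G D 0 (S k)) 0 p + a p * G D 0 p + G (fun k => a k * D k) p (S n - p)).
  { replace (S n) with (p + (S n - p))%nat at 1 by lia. rewrite Gadd, abel. simpl. ring. }
  rewrite Hid.
  set (E := G (Dl a) 0 (n - m)).
  assert (HE : E <= K * / INR (S m) * Au).
  { eapply Rle_trans. apply H. auto. apply Rmult_le_compat_l.
    apply Rmult_le_pos; auto. left; apply Rinv_0_lt_compat; lra.
    apply Gsub; auto; unfold p; lia. }
  assert (Hap : INR (S m) * a p <= G a p (S m) + INR (S m) * E).
  { apply Gavg. intros i Hi. pose proof (Gtel2 a p i).
    assert (G (fun k => Rabs (a k - a (S k))) p i <= E) by (unfold E; apply Gsub; [intros; apply Rabs_pos|unfold p; lia|unfold p; lia]).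
    lra. }
  assert (Hap2 : G a p (S m) <= Au) by (apply Gsub; auto; unfold p; lia).
  assert (Hap3 : a p <= (1 + K) * / INR (S m) * Au).
  { apply Rmult_le_reg_l with (INR (S m)). auto.
    replace (INR (S m) * ((1 + K) * / INR (S m) * Au)) with (Au + K * Au) by (field; lra).
    assert (INR (S m) * E <= K * Au).
    { replace (K * Au) with (INR (S m) * (K * / INR (S m) * Au)) by (field; lra).
      apply Rmult_le_compat_l; lra. }
    lra. }
  assert (T1 : Rabs (G (fun k => a k * D k) p (S n - p)) <= B1 * Au).
  { eapply Rle_trans. apply Gbound. apply HB1. apply Rmult_le_compat_l; auto.
    apply Gle. intros k. rewrite Rabs_right. apply Rle_refl. apply Rle_ge, Ha. }
  assert (T2 : Rabs (a p * G D 0 p) <= B2 * a p).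
  { rewrite Rabs_mult, Rabs_right by (apply Rle_ge, Ha). rewrite Rmult_comm. apply Rmult_le_compat_r; auto. }
  assert (T3 : Rabs (G (fun k => (a k - a (S k)) * G D 0 (S k)) 0 p) <= B2 * E).
  { eapply Rle_trans. apply Gbound. intros; apply HB2. apply Rmult_le_compat_l; auto.
    unfold E. apply Gsub; [intros; apply Rabs_pos|lia|unfold p; lia]. }
  assert (B2 * a p <= B2 * ((1 + K) * / INR (S m) * Au)) by (apply Rmult_le_compat_l; auto).
  assert (B2 * E <= B2 * (K * / INR (S m) * Au)) by (apply Rmult_le_compat_l; auto).
  eapply Rle_trans. apply Rabs_triang. eapply Rle_trans. apply Rplus_le_compat_r. apply Rabs_triang.
  replace (B2 * ((1 + 2 * K) * / INR (S m)) * Au) with (B2 * ((1 + K) * / INR (S m) * Au) + B2 * (K * / INR (S m) * Au)) by ring.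
  lra. Qed.

Lemma tau_facts n t : (2 <= n)%nat -> 2 * PI / INR n <= t -> t <= PI ->
  0 < t /\ (1 <= tau t)%nat /\ PI / t < INR (S (tau t)) /\ (2 * tau t <= n)%nat.
Proof. intros Hn H1 H2. pose proof PI_RGT_0.
  assert (Pn : 2 <= INR n) by (replace 2 with (INR 2) by reflexivity; apply le_INR; auto).
  assert (Ht : 0 < t). { eapply Rlt_le_trans; [|apply H1]. unfold Rdiv. apply Rmult_lt_0_compat. lra. apply Rinv_0_lt_compat; lra. }
  assert (Hr1 : 1 <= PI / t). { apply Rmult_le_reg_r with t; auto. unfold Rdiv. rewrite Rmult_assoc, Rinv_l; lra. }
  assert (Hr2 : PI / t <= INR n / 2).
  { apply Rmult_le_reg_r with (2 * t). lra. replace (PI / t * (2 * t)) with (2 * PI) by (field; lra).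
    replace (INR n / 2 * (2 * t)) with (INR n * t) by field.
    apply Rmult_le_reg_r with (/ INR n). apply Rinv_0_lt_compat; lra.
    replace (INR n * t * / INR n) with t by (field; lra). exact H1. }
  destruct (base_Int_part (PI / t)) as [B1 B2].
  set (z := Int_part (PI / t)) in *.
  assert (zpos : (0 < z)%Z) by (apply lt_IZR; simpl; lra).
  assert (Hz : INR (tau t) = IZR z).
  { unfold tau. fold z. rewrite INR_IZR_INZ, Znat.Z2Nat.id by lia. reflexivity. }
  repeat split; auto.
  - apply INR_le. rewrite Hz. simpl. apply IZR_le. lia.
  - rewrite S_INR, Hz. lra.
  - apply INR_le. rewrite mult_INR, Hz. simpl. lra. Qed.

Lemma final_ineq tot t s M c X : 0 < t -> t / 6 <= s -> PI / t < M -> 0 <= c -> 0 <= X ->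
  tot <= / (2 * s) * X + / (2 * s ^ 2) * (c * / M) * X ->
  tot <= (3 + 18 * c / PI) * / t * X.
Proof. intros Ht Hs HM Hc HX H. pose proof PI_RGT_0.
  assert (Hs0 : 0 < s) by lra.
  assert (PM : 0 < M). { eapply Rle_lt_trans; [|apply HM]. unfold Rdiv. apply Rmult_le_pos; [lra|left; apply Rinv_0_lt_compat; lra]. }
  assert (E1 : / (2 * s) <= 3 / t).
  { apply Rmult_le_reg_r with (2 * s * t). nra. replace (/ (2 * s) * (2 * s * t)) with t by (field; lra).
    replace (3 / t * (2 * s * t)) with (6 * s) by (field; lra). lra. }
  assert (E2 : / (2 * s ^ 2) <= 18 / (t * t)).
  { assert (0 < s ^ 2) by (apply pow_lt; lra). assert (0 < t * t) by nra.
    apply Rmult_le_reg_r with (2 * s ^ 2 * (t * t)). apply Rmult_lt_0_compat; lra. replace (/ (2 * s ^ 2) * (2 * s ^ 2 * (t * t))) with (t * t) by (field; lra).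
    replace (18 / (t * t) * (2 * s ^ 2 * (t * t))) with (36 * (s * s)) by (field; lra). assert (t <= 6 * s) by lra. assert (t * t <= 6 * s * t) by nra. nra. }
  assert (E3 : / M <= t / PI).
  { apply Rmult_le_reg_r with (M * PI). nra. replace (/ M * (M * PI)) with PI by (field; lra).
    replace (t / PI * (M * PI)) with (t * M) by (field; lra).
    assert (PI <= t * M). { apply Rmult_le_reg_r with (/ t). apply Rinv_0_lt_compat; lra.
      replace (t * M * / t) with M by (field; lra). unfold Rdiv in HM. lra. } lra. }
  assert (0 <= / (2 * s)) by (left; apply Rinv_0_lt_compat; lra).
  assert (0 <= / (2 * s ^ 2)) by (left; apply Rinv_0_lt_compat; assert (0 < s ^ 2) by (apply pow_lt; lra); lra).
  assert (0 <= / M) by (left; apply Rinv_0_lt_compat; lra).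
  assert (A1 : / (2 * s) * X <= 3 / t * X) by (apply Rmult_le_compat_r; auto).
  assert (A2 : c * / M <= c * (t / PI)) by (apply Rmult_le_compat_l; auto).
  assert (A3 : / (2 * s ^ 2) * (c * / M) <= 18 / (t * t) * (c * (t / PI))).
  { apply Rmult_le_compat; auto. apply Rmult_le_pos; auto. }
  assert (A4 : / (2 * s ^ 2) * (c * / M) * X <= 18 / (t * t) * (c * (t / PI)) * X) by (apply Rmult_le_compat_r; auto).
  replace ((3 + 18 * c / PI) * / t * X) with (3 / t * X + 18 / (t * t) * (c * (t / PI)) * X) by (field; lra).
  lra. Qed.

Theorem lemma2 (A : nat -> nat -> R) (hA : row_stochastic_lt A) :
  (MHBVS A ->
   exists C : R, forall (n : nat) (t : R), (2 <= n)%nat ->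
     2 * PI / INR n <= t -> t <= PI ->
     Rabs (sumR (fun k => A n k * Dir k t) 0 n) <= C * / t * Aup A n (n - 2 * tau t))
  /\
  (MRBVS A ->
   exists C : R, forall (n : nat) (t : R), (2 <= n)%nat ->
     2 * PI / INR n <= t -> t <= PI ->
     Rabs (sumR (fun k => A n k * Dir k t) 0 n) <= C * / t * Alow A n (tau t)).
Proof.
  destruct hA as [hA1 [hA2 hA3]].
  assert (Ha : forall n k, 0 <= A n k).
  { intros n k. destruct (Compare_dec.le_lt_dec k n). auto. rewrite hA2; auto; lra. }
  split.
  - intros [K HK]. exists (3 + 18 * (1 + 2 * Rabs K) / PI). intros n t Hn H1 H2.
    destruct (tau_facts n t Hn H1 H2) as [Ht [Ht1 [Ht2 Ht3]]].
    pose proof (sin_half_low t Ht H2) as Hs.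
    unfold Aup. rewrite !sumR_G, Nat.sub_0_r.
    apply final_ineq with (s := sin (t/2)) (M := INR (S (tau t))); auto.
    + pose proof (Rabs_pos K); lra.
    + apply Gnonneg; auto.
    + assert (HK0 : 0 <= Rabs K) by apply Rabs_pos.
      assert (Hmn : (tau t < n)%nat) by lia.
      apply (coreH (A n) (fun k => Dir k t) n (tau t) (Rabs K) _ _ (Ha n) HK0 Hmn Ht3).
      * intros m' Hm'. specialize (HK n m' Hm'). rewrite !sumR_G in HK.
        replace (S (n - m' - 1) - 0)%nat with (n - m')%nat in HK by lia.
        replace (S n - (n - m'))%nat with (S m') in HK by lia.
        eapply Rle_trans. apply HK. apply Rmult_le_compat_r. apply Gnonneg; auto.
        apply Rmult_le_compat_r. left; apply Rinv_0_lt_compat, lt_0_INR; lia. apply Rle_abs.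
      * intros; apply dir_bound; lra.
      * intros; apply dirsum_bound; lra.
  - intros [K HK]. exists (3 + 18 * (4 + 6 * Rabs K) / PI). intros n t Hn H1 H2.
    destruct (tau_facts n t Hn H1 H2) as [Ht [Ht1 [Ht2 Ht3]]].
    pose proof (sin_half_low t Ht H2) as Hs.
    unfold Alow. rewrite !sumR_G, !Nat.sub_0_r.
    apply final_ineq with (s := sin (t/2)) (M := INR (S (tau t))); auto.
    + pose proof (Rabs_pos K); lra.
    + apply Gnonneg; auto.
    + assert (Han : A n (S n) = 0) by (apply hA2; lia).
      assert (HK0 : 0 <= Rabs K) by apply Rabs_pos.
      assert (Hmn : (tau t < n)%nat) by lia.
      apply (coreR (A n) (fun k => Dir k t) n (tau t) (Rabs K) _ _ (Ha n) Han HK0 Ht1 Hmn).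
      * intros m' Hm'. specialize (HK n m' Hm'). rewrite !sumR_G in HK.
        replace (S (n - 1) - m')%nat with (n - m')%nat in HK by lia.
        eapply Rle_trans. apply HK. apply Rmult_le_compat_r. apply Gnonneg; auto.
        apply Rmult_le_compat_r. left; apply Rinv_0_lt_compat, lt_0_INR; lia. apply Rle_abs.
      * intros; apply dir_bound; lra.
      * intros; apply dirsum_bound; lra.
Qed.
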